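(* Let $f:(0,1)\to(0,1)$ be of the form $f(p)=1-\sum_{k=1}^\infty c_k(1-p)^k$ with $c_k\ge0$ and $\sum_k c_k=1$, and let $p\in(0,1)$. Algorithm 2 (described below), applied to i.i.d. Bernoulli($p$) inputs, uses a total number $N$ of inputs with $$\mathbb E[N]=\frac{f(p)}{p}\left(1+\frac{2}{p(1-p)}\right),$$ and there exist $A>0$, $\beta<1$ with $\Pr[N>n]\le A\beta^n$ for all $n$ (i.e. the algorithm is fast).
   Context: Let $d_k=c_k/(1-\sum_{j=1}^{k-1}c_j)\in[0,1]$ (if $c_K>0$ and $c_k=0$ for $k>K$, then $d_K=1$ and later $d_k$ are not needed). Write each $d_k$ in binary as $0.b_1b_2b_3\cdots$ with infinitely many fractional digits (so $1=0.111\cdots$). Algorithm 2 uses only the input sequence $X_1,X_2,\dots$ (i.i.d. Bernoulli($p$)), taken in order: set $i=1$. (2) Take one input, call it $X_i$. (3) Generate $V_i$ as follows: set $j=1$; (3.2) keep taking pairs of inputs until the two values in a pair differ, and let $T$ be the first value of that pair; (3.3) if $T=0$, increase $j$ and return to (3.2); otherwise set $V_i$ equal to the $j$-th fractional binary digit of $d_i$. (4) If $V_i=1$ or $X_i=1$, output $Y=X_i$ and stop; otherwise increase $i$ and return to (2). $N$ is the total number of inputs consumed in all steps. *)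

(* Defs.v *)
From Stdlib Require Import Reals List.
Open Scope R_scope.

(** Coefficients c_k are indexed from k = 1 (c 0 is unused). *)

Fixpoint psum (c : nat -> R) (k : nat) : R :=
  match k with
  | O => 0
  | S k' => psum c k' + c (S k')
  end.

(** d_k = c_k / (1 - sum_{j=1}^{k-1} c_j).  (When the denominator is 0, c_k = 0
    and Rocq's total division gives d_k = 0; such d_k are never used.) *)
Definition dcoef (c : nat -> R) (k : nat) : R := c k / (1 - psum c (k - 1)).

(** s is the binary expansion x = 0.s_1 s_2 s_3 ... with infinitely many
    fractional digits (non-terminating when x > 0; all zeros when x = 0). *)
Definition bin_expansion (x : R) (s : nat -> bool) : Prop :=
  infinite_sum (fun j => (if s (S j) then 1 else 0) / 2 ^ (S j)) x /\
  (0 < x -> forall m : nat, exists j : nat, (m < j)%nat /\ s j = true).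

(** States of Algorithm 2, advanced one input bit at a time.
    ReadX i        : about to take X_i (step 2).
    PairFst i x j  : X_i = x, generating V_i, current digit index j,
                     about to take the first element of a pair (step 3.2).
    PairSnd i x j t: same, first element of the current pair is t. *)
Inductive state : Type :=
| ReadX : nat -> state
| PairFst : nat -> bool -> nat -> state
| PairSnd : nat -> bool -> nat -> bool -> state
| Done : bool -> state.

(** bits i j = j-th fractional binary digit of d_i. *)
Definition step (bits : nat -> nat -> bool) (st : state) (a : bool) : state :=
  match st with
  | ReadX i => PairFst i a 1
  | PairFst i x j => PairSnd i x j a
  | PairSnd i x j t =>
      if Bool.eqb t a then PairFst i x j          (* pair equal: take another pair *)
      else if negb t then PairFst i x (S j)       (* T = 0: increase j *)
      else (* T = 1: V_i = bits i j *)
        if orb (bits i j) x then Done x else ReadX (S i)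
  | Done y => Done y
  end.

Definition run (bits : nat -> nat -> bool) (w : list bool) : state :=
  fold_left (step bits) w (ReadX 1).

Definition is_done (st : state) : bool :=
  match st with Done _ => true | _ => false end.

Fixpoint words (n : nat) : list (list bool) :=
  match n with
  | O => nil :: nil
  | S n' => map (cons false) (words n') ++ map (cons true) (words n')
  end.

Fixpoint weight (p : R) (w : list bool) : R :=
  match w with
  | nil => 1
  | a :: w' => (if a then p else 1 - p) * weight p w'
  end.

Definition sumR (l : list R) : R := fold_right Rplus 0 l.

Definition stops_exactly (bits : nat -> nat -> bool) (w : list bool) : bool :=
  is_done (run bits w) && negb (is_done (run bits (removelast w))) .

Definition prob_N_eq (bits : nat -> nat -> bool) (p : R) (n : nat) : R :=
  sumR (map (fun w => if stops_exactly bits w then weight p w else 0) (words n)).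

Definition prob_N_gt (bits : nat -> nat -> bool) (p : R) (n : nat) : R :=
  sumR (map (fun w => if is_done (run bits w) then 0 else weight p w) (words n)).

(* Main.v *)
Require Import Defs.
From Stdlib Require Import Reals List Lra Lia Psatz.
Import ListNotations.
Open Scope R_scope.


Definition runfrom (bits : nat -> nat -> bool) (st : state) (w : list bool) : state :=
  fold_left (step bits) w st.

Definition Gs bits p st n : R :=
  sumR (map (fun w => if is_done (runfrom bits st w) then 0 else weight p w) (words n)).

Definition Es bits p st n : R :=
  sumR (map (fun w => if andb (is_done (runfrom bits st w))
     (negb (is_done (runfrom bits st (removelast w)))) then weight p w else 0) (words n)).

Lemma sumR_app l1 l2 : sumR (l1 ++ l2) = sumR l1 + sumR l2.
Proof. induction l1; simpl; [lra| rewrite IHl1; lra]. Qed.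

Lemma sumR_words_S (F : list bool -> R) n :
  sumR (map F (words (S n))) =
  sumR (map (fun w => F (false :: w)) (words n)) + sumR (map (fun w => F (true :: w)) (words n)).
Proof. simpl. rewrite map_app, sumR_app, !map_map. reflexivity. Qed.

Lemma sumR_scal (F : list bool -> R) k l :
  sumR (map (fun w => k * F w) l) = k * sumR (map F l).
Proof. induction l; simpl; [lra| rewrite IHl; lra]. Qed.

Lemma sumR_ext_in (F G : list bool -> R) l :
  (forall w, In w l -> F w = G w) -> sumR (map F l) = sumR (map G l).
Proof.
  induction l; simpl; intros H; auto.
  rewrite H by auto. rewrite IHl; auto.
Qed.

Lemma sumR_le (F G : list bool -> R) l :
  (forall w, F w <= G w) -> sumR (map F l) <= sumR (map G l).
Proof. induction l; simpl; intros H; [lra|]. specialize (IHl H). specialize (H a). lra. Qed.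

Lemma sumR_zero (F : list bool -> R) l :
  (forall w, F w = 0) -> sumR (map F l) = 0.
Proof. induction l; simpl; intros H; auto. rewrite H, IHl; auto; lra. Qed.

Lemma words_length n w : In w (words n) -> length w = n.
Proof.
  revert w; induction n; simpl; intros w H.
  - destruct H as [<-|[]]; auto.
  - apply in_app_or in H. destruct H as [H|H]; apply in_map_iff in H;
    destruct H as [w' [<- Hw]]; simpl; rewrite IHn; auto.
Qed.

Lemma weight_words p n : sumR (map (weight p) (words n)) = 1.
Proof.
  induction n; simpl. lra.
  rewrite map_app, sumR_app, !map_map. simpl.
  rewrite (sumR_scal (weight p) (1-p)), (sumR_scal (weight p) p), IHn. lra.
Qed.

Lemma runfrom_Done bits y w : runfrom bits (Done y) w = Done y.
Proof. induction w; simpl; auto. Qed.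

Lemma step_done bits st a : is_done st = true -> step bits st a = st.
Proof. destruct st; simpl; try discriminate; auto. Qed.

Lemma done_Done st : is_done st = true -> exists y, st = Done y.
Proof. destruct st; simpl; try discriminate; eauto. Qed.

Lemma Gs_S bits p st n :
  Gs bits p st (S n) = (1-p) * Gs bits p (step bits st false) n + p * Gs bits p (step bits st true) n.
Proof.
  unfold Gs. rewrite sumR_words_S. simpl weight.
  rewrite <- (sumR_scal _ (1-p)), <- (sumR_scal _ p).
  f_equal; apply sumR_ext_in; intros w _; unfold runfrom; simpl;
  destruct (is_done _); lra.
Qed.

Lemma Gs_0 bits p st : Gs bits p st 0 = if is_done st then 0 else 1.
Proof. unfold Gs; simpl. destruct (is_done st); lra. Qed.

Lemma Gs_Done bits p y n : Gs bits p (Done y) n = 0.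
Proof. unfold Gs. apply sumR_zero. intros w. rewrite runfrom_Done. reflexivity. Qed.

Lemma Gs_bounds bits p st n : 0 < p < 1 -> 0 <= Gs bits p st n <= 1.
Proof.
  intros Hp; revert st; induction n; intros st.
  - rewrite Gs_0; destruct (is_done st); lra.
  - rewrite Gs_S. destruct (IHn (step bits st false)); destruct (IHn (step bits st true)).
    remember (Gs bits p (step bits st false) n) as a. remember (Gs bits p (step bits st true) n) as b.
    split. nra. assert (p * b <= p) by nra. assert ((1-p)*a <= 1-p) by nra. lra.
Qed.

Lemma Gs_mono bits p st n : 0 < p < 1 -> Gs bits p st (S n) <= Gs bits p st n.
Proof.
  intros Hp; revert st; induction n; intros st.
  - rewrite Gs_S, (Gs_0 bits p st). destruct (is_done st) eqn:E.
    + destruct (done_Done st E) as [y ->]. simpl. rewrite Gs_Done. lra.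
    + destruct (Gs_bounds bits p (step bits st false) 0 Hp);
      destruct (Gs_bounds bits p (step bits st true) 0 Hp).
      remember (Gs bits p (step bits st false) 0) as a. remember (Gs bits p (step bits st true) 0) as b.
      assert (p * b <= p) by nra. assert ((1-p)*a <= 1-p) by nra. lra.
  - rewrite (Gs_S bits p st (S n)), (Gs_S bits p st n).
    pose proof (IHn (step bits st false)); pose proof (IHn (step bits st true)).
    apply Rplus_le_compat; apply Rmult_le_compat_l; lra.
Qed.

Lemma Gs_mono_k bits p st n k : 0 < p < 1 -> Gs bits p st (k + n) <= Gs bits p st n.
Proof.
  intros Hp; induction k; simpl. lra.
  pose proof (Gs_mono bits p st (k+n) Hp). lra.
Qed.

Lemma Es_0 bits p st : Es bits p st 0 = 0.
Proof. unfold Es; simpl. destruct (is_done st); simpl; lra. Qed.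

Lemma Es_S bits p st n : 0 < p < 1 ->
  Es bits p st (S n) = Gs bits p st n - Gs bits p st (S n).
Proof.
  intros Hp; revert st; induction n; intros st.
  - rewrite Gs_S, Gs_0. unfold Es, Gs; simpl. unfold runfrom; simpl.
    destruct (is_done st) eqn:E.
    + rewrite !step_done by auto. rewrite E. simpl. lra.
    + destruct (is_done (step bits st false)), (is_done (step bits st true)); simpl; lra.
  - rewrite (Gs_S bits p st (S n)), (Gs_S bits p st n).
    transitivity ((1-p) * (Gs bits p (step bits st false) n - Gs bits p (step bits st false) (S n))
      + p * (Gs bits p (step bits st true) n - Gs bits p (step bits st true) (S n))); [|ring].
    rewrite <- (IHn (step bits st false)), <- (IHn (step bits st true)).
    unfold Es. rewrite sumR_words_S. simpl weight.
    rewrite <- (sumR_scal _ (1-p)), <- (sumR_scal _ p).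
    f_equal; apply sumR_ext_in; intros w Hw; apply words_length in Hw;
    destruct w as [|a w]; try discriminate;
    unfold runfrom; simpl removelast; simpl fold_left;
    destruct (andb _ _); lra.
Qed.


Lemma pow_le1 x n : 0 <= x <= 1 -> 0 <= x ^ n <= 1.
Proof. intros H. split. apply pow_le; lra. rewrite <- (pow1 n). apply pow_incr; lra. Qed.

Ltac fin6 bits := unfold runfrom; simpl;
  repeat (match goal with |- context [bits ?a ?b] => destruct (bits a b); simpl end);
  reflexivity.

Lemma reach6 bits st : exists w, length w = 6%nat /\ is_done (runfrom bits st w) = true.
Proof.
  destruct st as [i|i x j|i x j t|y].
  - exists [true;true;false;true;true;true]. split; auto. fin6 bits.
  - exists [true;false;true;true;false;true]. split; auto. destruct x; fin6 bits.
  - destruct t.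
    + exists [false;true;true;false;true;true]. split; auto. destruct x; fin6 bits.
    + exists [false;true;false;true;true;false]. split; auto. destruct x; fin6 bits.
  - exists [true;true;true;true;true;true]. split; auto.
Qed.

Lemma drop_bound bits p k : 0 < p < 1 -> forall st n B, 0 <= B ->
  (forall s, Gs bits p s n <= B) ->
  (exists w, length w = k /\ is_done (runfrom bits st w) = true) ->
  Gs bits p st (k + n) <= (1 - (p*(1-p))^k) * B.
Proof.
  intros Hp; induction k; intros st n B HB HG [w [Hl Hd]].
  - destruct w; [|discriminate]. simpl in *. destruct (done_Done st Hd) as [y ->].
    rewrite Gs_Done. lra.
  - destruct w as [|a w]; [discriminate|]. simpl in Hl. injection Hl as Hl.
    simpl plus. rewrite Gs_S.
    assert (Hm : 0 < p*(1-p) <= p /\ p * (1-p) <= 1 - p) by (split; [split|]; nra).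
    assert (Hk : 0 <= (p*(1-p))^k <= 1) by (apply pow_le1; nra).
    assert (IH := IHk (step bits st a) n B HB HG (ex_intro _ w (conj Hl Hd))).
    pose proof (Gs_mono_k bits p (step bits st false) n k Hp).
    pose proof (Gs_mono_k bits p (step bits st true) n k Hp).
    pose proof (HG (step bits st false)). pose proof (HG (step bits st true)).
    simpl pow. remember ((p*(1-p))^k) as M. remember (p*(1-p)) as m.
    destruct a.
    + remember (Gs bits p (step bits st true) (k+n)) as g1.
      remember (Gs bits p (step bits st false) (k+n)) as g0.
      assert ((1-p)*g0 <= (1-p)*B) by (apply Rmult_le_compat_l; lra).
      assert (p*g1 <= p*((1-M)*B)) by (apply Rmult_le_compat_l; lra).
      assert (m*M*B <= p*M*B) by (apply Rmult_le_compat_r; [lra|]; apply Rmult_le_compat_r; lra).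
      lra.
    + remember (Gs bits p (step bits st true) (k+n)) as g1.
      remember (Gs bits p (step bits st false) (k+n)) as g0.
      assert (p*g1 <= p*B) by (apply Rmult_le_compat_l; lra).
      assert ((1-p)*g0 <= (1-p)*((1-M)*B)) by (apply Rmult_le_compat_l; lra).
      assert (m*M*B <= (1-p)*M*B) by (apply Rmult_le_compat_r; [lra|]; apply Rmult_le_compat_r; lra).
      lra.
Qed.

Lemma G_geom bits p : 0 < p < 1 -> forall q r st,
  Gs bits p st (q * 6 + r) <= (1 - (p*(1-p))^6) ^ q.
Proof.
  intros Hp q; induction q; intros r st.
  - simpl. apply Gs_bounds; auto.
  - replace (S q * 6 + r)%nat with (6 + (q*6+r))%nat by lia.
    rewrite <- tech_pow_Rmult.
    assert (0 <= (1 - (p*(1-p))^6)^q).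
    { apply pow_le. assert (0 <= (p*(1-p))^6 <= 1) by (apply pow_le1; nra). lra. }
    eapply Rle_trans. apply (drop_bound bits p 6 Hp st (q*6+r) _ H (IHq r) (reach6 bits st)). right; reflexivity.
Qed.

Lemma bernoulli x n : 0 <= x <= 1 -> 1 - INR n * x <= (1 - x) ^ n.
Proof.
  intros Hx; induction n. simpl; lra.
  rewrite S_INR. simpl pow.
  assert (0 <= (1-x)^n) by (apply pow_le; lra).
  assert (0 <= INR n) by apply pos_INR. assert (0 <= INR n * x * x) by (apply Rmult_le_pos; [apply Rmult_le_pos|]; lra). assert ((1-x)^n * (1-x) >= (1 - INR n * x)*(1-x)) by (apply Rmult_ge_compat_r; lra). lra.
Qed.

Lemma G_exp_bound bits p : 0 < p < 1 ->
  let beta := 1 - (p*(1-p))^6 / 6 in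
  0 < beta < 1 /\ forall st n, Gs bits p st n <= / beta ^ 5 * beta ^ n.
Proof.
  intros Hp beta.
  assert (Hm : 0 < (p*(1-p))^6 <= 1).
  { split. apply pow_lt; nra. apply pow_le1; nra. }
  pose proof (G_geom bits p Hp) as HG.
  unfold beta; clear beta.
  remember ((p*(1-p))^6) as M. clear HeqM.
  set (beta := 1 - M/6).
  assert (Hb : 0 < beta < 1) by (unfold beta; lra).
  split; auto. intros st n.
  rewrite (Nat.div_mod_eq n 6). set (q := (n / 6)%nat). set (r := (n mod 6)%nat).
  assert (Hr : (r < 6)%nat) by (apply Nat.mod_upper_bound; lia).
  replace (6 * q + r)%nat with (q * 6 + r)%nat by lia.
  eapply Rle_trans. apply HG.
  assert (H6 : 1 - M <= beta ^ 6).
  { assert (H := bernoulli (M/6) 6). unfold beta.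
    replace (INR 6) with 6 in H by (simpl; lra). lra. }
  assert (Hq : (1 - M)^q <= (beta^6)^q) by (apply pow_incr; lra).
  rewrite <- pow_mult in Hq. eapply Rle_trans; [exact Hq|].
  rewrite pow_add, (Nat.mul_comm 6 q).
  assert (0 < beta ^ r) by (apply pow_lt; lra).
  assert (0 < beta ^ 5) by (apply pow_lt; lra).
  assert (beta ^ 5 <= beta ^ r).
  { replace 5%nat with (r + (5 - r))%nat by lia. rewrite pow_add.
    assert (beta ^ (5-r) <= 1) by (apply pow_le1; lra).
    assert (0 <= beta ^ (q*6)) by (apply pow_le; lra). nra. }
  assert (0 <= beta ^ (q*6)) by (apply pow_le; lra).
  apply (Rmult_le_reg_l (beta^5)); auto.
  rewrite <- Rmult_assoc, Rinv_r by lra.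
  remember (beta ^ (q*6)) as X. remember (beta^r) as Y. remember (beta^5) as Z.
  nra.
Qed.


Definition Wf (c : nat -> R) (i : nat) : R := 1 - psum c (i - 1).
Fixpoint qs (c : nat -> R) (p : R) (n : nat) : R :=
  match n with O => 0 | S k => qs c p k + c (S k) * (1 - p) ^ (S k) end.
Definition Qf c p fp i : R := (1 - fp) - qs c p (i - 1).
Definition Tf c p fp i : R := (Wf c i - Qf c p fp i / (1 - p) ^ (i - 1)) / p.
Definition Cc (p : R) : R := 2 / (p * (1 - p)).
Definition Rf c p fp i : R := (1 + Cc p) * Tf c p fp i / Wf c i.
Definition bR (b : bool) : R := if b then 1 else 0.
Fixpoint Dn (c : nat -> R) (bits : nat -> nat -> bool) (i n : nat) : R :=
  match n with O => dcoef c i | S k => 2 * Dn c bits i k - bR (bits i (S k)) end.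
Definition hF c p fp bits i (x : bool) j : R :=
  Cc p + (if x then 0 else (1 - Dn c bits i (j - 1)) * Rf c p fp (S i)).
Definition hh c p fp bits (st : state) : R :=
  match st with
  | ReadX i => Rf c p fp i
  | PairFst i x j => hF c p fp bits i x j
  | PairSnd i x j t =>
      if t then 1 + p * hF c p fp bits i x j +
                (1 - p) * (if x then 0 else (1 - bR (bits i j)) * Rf c p fp (S i))
      else 1 + (1 - p) * hF c p fp bits i x j + p * hF c p fp bits i x (S j)
  | Done _ => 0
  end.
Definition good c (st : state) : Prop :=
  match st with
  | ReadX i => (1 <= i)%nat /\ 0 < Wf c i
  | PairFst i _ j => (1 <= i)%nat /\ (1 <= j)%nat /\ 0 < Wf c i
  | PairSnd i _ j _ => (1 <= i)%nat /\ (1 <= j)%nat /\ 0 < Wf c i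
  | Done _ => True
  end.

Definition facts c p fp bits : Prop :=
  0 < p < 1 /\
  (forall i, (1 <= i)%nat -> forall n, 0 <= Dn c bits i n <= 1) /\
  (forall i, (1 <= i)%nat -> 0 <= Wf c i) /\
  (forall i, (1 <= i)%nat -> 0 <= Tf c p fp i <= Wf c i / p).

Lemma Dn_one c bits i : (forall n, Dn c bits i n <= 1) -> dcoef c i = 1 ->
  forall n, Dn c bits i n = 1 /\ bits i (S n) = true.
Proof.
  intros Hb Hd. assert (H : forall n, Dn c bits i n = 1).
  { induction n; simpl; auto. specialize (Hb (S n)); simpl in Hb.
    rewrite IHn in *. destruct (bits i (S n)); simpl in *; lra. }
  intros n; split; auto. specialize (Hb (S n)). simpl in Hb. rewrite H in Hb.
  destruct (bits i (S n)); simpl in *; auto; lra.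
Qed.

Lemma W_S c k : Wf c (S (S k)) = Wf c (S k) - c (S k).
Proof. unfold Wf. simpl. rewrite Nat.sub_0_r. lra. Qed.

Lemma step_good c p fp bits st a : facts c p fp bits -> good c st -> good c (step bits st a).
Proof.
  intros [Hp [HD [HW HT]]] Hg.
  destruct st as [i|i x j|i x j t|y]; simpl in *; try tauto.
  - repeat split; try lia; tauto.
  - destruct t, a; simpl; try tauto.
    + destruct (bits i j || x)%bool eqn:E; simpl; auto.
      destruct i as [|k]; [lia|]. split; [lia|].
      rewrite W_S. apply Bool.orb_false_iff in E. destruct E as [E1 E2].
      assert (Hd : dcoef c (S k) <= 1) by (apply (HD (S k) ltac:(lia) 0%nat)).
      assert (Hne : dcoef c (S k) <> 1).
      { intros H1. destruct j as [|j]; [lia|].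
        destruct (Dn_one c bits (S k) (fun n => proj2 (HD (S k) ltac:(lia) n)) H1 j) as [_ Hj].
        congruence. }
      unfold dcoef in Hd, Hne. simpl in Hd, Hne. rewrite Nat.sub_0_r in Hd, Hne.
      unfold Wf in *. simpl in *. rewrite Nat.sub_0_r in *.
      assert (c (S k) / (1 - psum c k) < 1) by lra.
      apply Rmult_lt_compat_r with (r := 1 - psum c k) in H; [|lra].
      unfold Rdiv in H. rewrite Rmult_assoc, Rinv_l in H by lra. lra.
    + repeat split; try lia; tauto.
Qed.

Lemma good_run c p fp bits st w : facts c p fp bits -> good c st -> good c (runfrom bits st w).
Proof.
  intros Hf; revert st; induction w; intros st Hg; simpl; auto.
  apply IHw. eapply step_good; eauto.
Qed.

Lemma T_rec c p fp k : 0 < p < 1 ->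
  Tf c p fp (S k) = Wf c (S k) + (1 - p) * Tf c p fp (S (S k)).
Proof.
  intros Hp. unfold Tf, Qf. rewrite W_S. unfold Wf.
  simpl. rewrite !Nat.sub_0_r.
  assert (0 < (1-p)^k) by (apply pow_lt; lra).
  field. split; lra.
Qed.

Lemma R_eq c p fp bits k : facts c p fp bits -> 0 < Wf c (S k) ->
  Rf c p fp (S k) = 1 + Cc p + (1 - p) * (1 - dcoef c (S k)) * Rf c p fp (S (S k)).
Proof.
  intros Hf HW. pose proof Hf as [Hp [HD [HWp HT]]].
  assert (Hd : 1 - dcoef c (S k) = Wf c (S (S k)) / Wf c (S k)).
  { unfold dcoef. rewrite W_S. unfold Wf. simpl. rewrite Nat.sub_0_r.
    unfold Wf in HW. simpl in HW. rewrite Nat.sub_0_r in HW. field. lra. }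
  rewrite Hd. unfold Rf. rewrite (T_rec c p fp k Hp).
  assert (HW' := HWp (S (S k)) ltac:(lia)).
  destruct (Req_dec (Wf c (S (S k))) 0) as [E|E].
  - assert (HT' := HT (S (S k)) ltac:(lia)). rewrite E in *.
    assert (Tf c p fp (S (S k)) = 0) by (unfold Rdiv in HT'; rewrite Rmult_0_l in HT'; lra).
    rewrite H. replace ((1 + Cc p) * 0 / 0) with 0 by (unfold Rdiv; ring). field. lra.
  - field. split; lra.
Qed.

Lemma C_id p : 0 < p < 1 -> p * (1 - p) * Cc p = 2.
Proof. intros. unfold Cc. field. split; lra. Qed.

Lemma hh_eq c p fp bits st : facts c p fp bits -> good c st -> is_done st = false ->
  hh c p fp bits st = 1 + (1 - p) * hh c p fp bits (step bits st false)
                        + p * hh c p fp bits (step bits st true).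
Proof.
  intros Hf Hg Hnd. pose proof Hf as [Hp [HD [HWp HT]]].
  pose proof (C_id p Hp) as HC.
  destruct st as [i|i x j|i x j t|y]; simpl in Hg |- *; try discriminate.
  - destruct Hg as [Hi HW]. destruct i as [|k]; [lia|].
    rewrite (R_eq c p fp bits k Hf HW). unfold hF. simpl. lra.
  - destruct Hg as [Hi [Hj HW]]. destruct j as [|j]; [lia|].
    unfold hF. simpl. rewrite Nat.sub_0_r.
    remember (Rf c p fp (S i)) as R'. remember (Dn c bits i j) as D.
    remember (bR (bits i (S j))) as b. unfold Cc.
    destruct x; field; split; lra.
  - destruct t; simpl.
    + destruct (bits i j), x; simpl; ring.
    + ring.
Qed.

Definition Hmax p : R := 1 + 2 * (Cc p + (1 + Cc p) / p) + (1 + Cc p) / p.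

Lemma R_bounds c p fp bits i : facts c p fp bits -> (1 <= i)%nat ->
  0 <= Rf c p fp i <= (1 + Cc p) / p.
Proof.
  intros Hf Hi. pose proof Hf as [Hp [HD [HWp HT]]].
  assert (HC : 0 < Cc p) by (unfold Cc; apply Rdiv_lt_0_compat; nra).
  destruct (HT i Hi) as [T0 T1]. pose proof (HWp i Hi) as W0.
  unfold Rf. destruct (Req_dec (Wf c i) 0) as [E|E].
  - rewrite E. unfold Rdiv. rewrite Rinv_0, Rmult_0_r. split; [lra|].
    apply Rmult_le_pos; [lra| left; apply Rinv_0_lt_compat; lra].
  - assert (0 < Wf c i) by lra. split.
    + apply Rmult_le_pos; [apply Rmult_le_pos|left; apply Rinv_0_lt_compat]; lra.
    + unfold Rdiv. rewrite Rmult_assoc. apply Rmult_le_compat_l; [lra|].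
      apply (Rmult_le_reg_l (Wf c i)); auto.
      replace (Wf c i * (Tf c p fp i * / Wf c i)) with (Tf c p fp i) by (field; lra).
      unfold Rdiv in T1. lra.
Qed.

Lemma hh_bounds c p fp bits st : facts c p fp bits -> good c st ->
  0 <= hh c p fp bits st <= Hmax p.
Proof.
  intros Hf Hg. pose proof Hf as [Hp [HD [HWp HT]]].
  assert (HC : 0 < Cc p) by (unfold Cc; apply Rdiv_lt_0_compat; nra).
  assert (HRB : 0 < (1 + Cc p) / p) by (apply Rdiv_lt_0_compat; lra).
  unfold Hmax.
  assert (HhF : forall i x j, (1 <= i)%nat -> 0 <= hF c p fp bits i x j <= Cc p + (1 + Cc p) / p).
  { intros i x j Hi. unfold hF. destruct x; [lra|].
    destruct (HD i Hi (j-1)%nat). destruct (R_bounds c p fp bits (S i) Hf ltac:(lia)).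
    assert ((1 - Dn c bits i (j-1)) * Rf c p fp (S i) <= 1 * ((1 + Cc p) / p))
      by (apply Rmult_le_compat; lra).
    assert (0 <= (1 - Dn c bits i (j-1)) * Rf c p fp (S i)) by (apply Rmult_le_pos; lra).
    lra. }
  destruct st as [i|i x j|i x j t|y]; simpl in Hg |- *.
  - destruct (R_bounds c p fp bits i Hf) as [R0 R1]; [tauto|]. lra.
  - destruct (HhF i x j) as [H0 H1]; [tauto|]. lra.
  - destruct (HhF i x j) as [H0 H1]; [tauto|]. destruct (HhF i x (S j)) as [H2 H3]; [tauto|].
    destruct (R_bounds c p fp bits (S i) Hf) as [R0 R1]; [lia|].
    assert (0 <= bR (bits i j) <= 1) by (destruct (bits i j); simpl; lra).
    destruct t.
    + assert (0 <= (if x then 0 else (1 - bR (bits i j)) * Rf c p fp (S i)) <= (1 + Cc p) / p).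
      { destruct x; [lra|]. split; [nra|]. assert ((1 - bR (bits i j)) * Rf c p fp (S i) <= 1 * ((1 + Cc p) / p)) by (apply Rmult_le_compat; lra). lra. }
      remember (if x then 0 else (1 - bR (bits i j)) * Rf c p fp (S i)) as Y.
      remember (hF c p fp bits i x j) as F. split; nra.
    + remember (hF c p fp bits i x j) as F. remember (hF c p fp bits i x (S j)) as F'.
      split; nra.
  - split; lra.
Qed.

Definition Hs bits p h st n : R :=
  sumR (map (fun w => weight p w * h (runfrom bits st w)) (words n)).

Lemma Hs_S bits p h st n :
  Hs bits p h st (S n) = (1-p) * Hs bits p h (step bits st false) n + p * Hs bits p h (step bits st true) n.
Proof.
  unfold Hs. rewrite sumR_words_S. simpl weight.
  rewrite <- (sumR_scal _ (1-p)), <- (sumR_scal _ p).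
  f_equal; apply sumR_ext_in; intros w _; unfold runfrom; simpl; ring.
Qed.

Fixpoint ssum (f : nat -> R) (n : nat) : R :=
  match n with O => 0 | S k => ssum f k + f k end.

Lemma ssum_shift f n : ssum f (S n) = f O + ssum (fun k => f (S k)) n.
Proof. induction n; simpl in *; lra. Qed.

Lemma ssum_lin f g a b n : ssum (fun k => a * f k + b * g k) n = a * ssum f n + b * ssum g n.
Proof. induction n; simpl; [ring| rewrite IHn; ring]. Qed.

Lemma ssum_ext f g n : (forall k, f k = g k) -> ssum f n = ssum g n.
Proof. intros H; induction n; simpl; auto. rewrite IHn, H; auto. Qed.

Lemma dummy_mart : True. Proof. exact I. Qed.

Lemma mart c p fp bits n : facts c p fp bits -> forall st, good c st ->
  Hs bits p (hh c p fp bits) st n = hh c p fp bits st - ssum (Gs bits p st) n.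
Proof.
  intros Hf. pose proof Hf as [Hp _]. induction n; intros st Hg.
  - unfold Hs. simpl. ring.
  - destruct (is_done st) eqn:E.
    + destruct (done_Done st E) as [y ->].
      unfold Hs. rewrite sumR_zero. simpl.
      * rewrite (ssum_ext _ (fun _ => 0)) by (intros; apply Gs_Done).
        assert (forall m, ssum (fun _ => 0) m = 0) as Z by (induction m; simpl; lra).
        rewrite Z; rewrite ?Gs_Done; ring.
      * intros w. rewrite runfrom_Done. simpl. ring.
    + rewrite Hs_S, !IHn by (eapply step_good; eauto).
      rewrite ssum_shift, Gs_0, E.
      rewrite (ssum_ext (fun k => Gs bits p st (S k)) (fun k => (1-p) * Gs bits p (step bits st false) k + p * Gs bits p (step bits st true) k))
        by (intros; apply Gs_S).
      rewrite ssum_lin, (hh_eq c p fp bits st Hf Hg E). ring.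
Qed.

Lemma Hs_bounds c p fp bits n st : facts c p fp bits -> good c st ->
  0 <= Hs bits p (hh c p fp bits) st n <= Hmax p * Gs bits p st n.
Proof.
  intros Hf Hg. pose proof Hf as [Hp _].
  assert (Hw : forall w, 0 <= weight p w).
  { induction w; simpl; [lra|]. destruct a; apply Rmult_le_pos; lra. }
  unfold Hs, Gs. split.
  - rewrite <- (sumR_zero (fun _ => 0) (words n)) by auto.
    apply sumR_le. intros w. apply Rmult_le_pos; auto.
    apply hh_bounds; auto. eapply good_run; eauto.
  - rewrite <- sumR_scal. apply sumR_le. intros w.
    destruct (hh_bounds c p fp bits (runfrom bits st w) Hf (good_run c p fp bits st w Hf Hg)).
    destruct (is_done (runfrom bits st w)) eqn:E.
    + destruct (done_Done _ E) as [y Hy]. rewrite Hy. simpl. lra.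
    + specialize (Hw w). nra.
Qed.

From Coquelicot Require Import Coquelicot.


Lemma series_nonneg a l : is_series a l -> (forall n, 0 <= a n) -> 0 <= l.
Proof.
  intros H Ha. apply is_series_Reals in H.
  assert (G : Un_growing (sum_f_R0 a)).
  { intros n. simpl. specialize (Ha (S n)). lra. }
  pose proof (growing_ineq _ _ G H 0%nat). simpl in H0. specialize (Ha 0%nat). lra.
Qed.

Lemma series_le a b la lb : is_series a la -> is_series b lb ->
  (forall n, 0 <= a n <= b n) -> la <= lb.
Proof.
  intros Ha Hb H. rewrite <- (is_series_unique _ _ Ha), <- (is_series_unique _ _ Hb).
  apply Series_le; auto. exists lb; auto.
Qed.

Lemma series_tail a l : is_series a l -> forall m, is_series (fun k => a (m + k)%nat) (l - ssum a m).
Proof.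
  intros H m; induction m.
  - simpl. apply (is_series_ext a). intros; reflexivity.
    rewrite Rminus_0_r. auto.
  - apply (is_series_ext (fun k => a (m + S k)%nat)). intros; f_equal; lia.
    apply (is_series_incr_1 (fun k => a (m + k)%nat)).
    assert (E : (l - ssum a (S m)) + a (m + 0)%nat = l - ssum a m)
      by (simpl; rewrite Nat.add_0_r; ring).
    change (is_series (fun k => a (m + k)%nat) ((l - ssum a (S m)) + a (m + 0)%nat)).
    rewrite E. auto.
Qed.

Lemma series_scal2 a l k : is_series a l -> is_series (fun n => k * a n) (k * l).
Proof. intros H. apply (is_series_scal k a l H). Qed.

Lemma half_series : is_series (fun l => / 2 ^ (S l)) 1.
Proof.
  assert (H := is_series_geom (/2) ltac:(rewrite Rabs_pos_eq; lra)).
  apply (series_scal2 _ _ (/2)) in H.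
  replace (/2 * / (1 - /2)) with 1 in H by field.
  apply (is_series_ext (fun n => /2 * (/2)^n) (fun l => /2^(S l))); auto.
  intros n. rewrite pow_inv. simpl. field. apply pow_nonzero. lra.
Qed.

Lemma Dn_series c bits i : bin_expansion (dcoef c i) (bits i) ->
  forall n, is_series (fun l => bR (bits i (n + S l)%nat) / 2 ^ (S l)) (Dn c bits i n).
Proof.
  intros [Hs _] n. induction n.
  - apply is_series_Reals. simpl. exact Hs.
  - set (a := fun l => bR (bits i (n + S l)%nat) / 2 ^ (S l)) in IHn.
    assert (IH' : is_series (fun k => a (S k)) (Dn c bits i n - a 0%nat)).
    { apply is_series_incr_1.
      assert (E : (Dn c bits i n - a 0%nat) + a 0%nat = Dn c bits i n) by ring.
      change (is_series a ((Dn c bits i n - a 0%nat) + a 0%nat)). rewrite E. exact IHn. }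
    apply (series_scal2 _ _ 2) in IH'.
    apply (is_series_ext (fun k => 2 * a (S k))).
    { intros k. unfold a. replace (n + S (S k))%nat with (S n + S k)%nat by lia. simpl. field.
      apply pow_nonzero; lra. }
    replace (Dn c bits i (S n)) with (2 * (Dn c bits i n - a 0%nat)).
    exact IH'.
    unfold a. simpl. rewrite Nat.add_1_r. field.
Qed.

Lemma Dn_bounds c bits i : bin_expansion (dcoef c i) (bits i) ->
  forall n, 0 <= Dn c bits i n <= 1.
Proof.
  intros H n. pose proof (Dn_series c bits i H n) as Hs.
  assert (Ht : forall l, 0 <= bR (bits i (n + S l)%nat) / 2 ^ (S l) <= / 2 ^ (S l)).
  { intros l. assert (0 < 2 ^ S l) by (apply pow_lt; lra).
    destruct (bits i (n + S l)%nat); simpl bR; unfold Rdiv; split.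
    - rewrite Rmult_1_l. left. apply Rinv_0_lt_compat; auto.
    - lra.
    - lra.
    - rewrite Rmult_0_l. left. apply Rinv_0_lt_compat; auto. }
  split.
  - apply (series_nonneg _ _ Hs). intros; apply Ht.
  - apply (series_le _ _ _ _ Hs half_series). auto.
Qed.

Lemma ssum_psum c m : ssum (fun k => c (S k)) m = psum c m.
Proof. induction m; simpl; auto. rewrite IHm. reflexivity. Qed.

Lemma ssum_qs c p m : ssum (fun k => c (S k) * (1 - p) ^ (S k)) m = qs c p m.
Proof. induction m; cbn [ssum qs]; auto. rewrite IHm. reflexivity. Qed.

Lemma W_T_bounds c p fp : (forall k, (1 <= k)%nat -> 0 <= c k) ->
  is_series (fun k => c (S k)) 1 -> 0 < p < 1 ->
  is_series (fun k => c (S k) * (1 - p) ^ (S k)) (1 - fp) ->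
  forall i, (1 <= i)%nat -> 0 <= Wf c i /\ 0 <= Tf c p fp i <= Wf c i / p.
Proof.
  intros Hc H1 Hp H2 i Hi.
  set (m := (i - 1)%nat).
  assert (HW := series_tail _ _ H1 m). rewrite ssum_psum in HW.
  assert (HQ := series_tail _ _ H2 m). rewrite ssum_qs in HQ.
  assert (EW : Wf c i = 1 - psum c m) by reflexivity.
  assert (EQ : Qf c p fp i = 1 - fp - qs c p m) by reflexivity.
  assert (Hcn : forall k, 0 <= c (S (m + k))) by (intros; apply Hc; lia).
  assert (W0 : 0 <= Wf c i) by (rewrite EW; apply (series_nonneg _ _ HW); auto).
  assert (Hpm : 0 < (1-p)^m) by (apply pow_lt; lra).
  assert (Q0 : 0 <= Qf c p fp i).
  { rewrite EQ; apply (series_nonneg _ _ HQ). intros k.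
    apply Rmult_le_pos; auto. apply pow_le; lra. }
  assert (Q1 : Qf c p fp i <= (1-p)^m * Wf c i).
  { rewrite EQ, EW. apply (series_le _ _ _ _ HQ (series_scal2 _ _ ((1-p)^m) HW)).
    intros k. split. apply Rmult_le_pos; auto. apply pow_le; lra.
    replace (m + S k)%nat with (S (m + k)) by lia.
    replace ((1 - p) ^ S (m + k)) with ((1-p)^m * (1-p)^(S k)) by (rewrite <- pow_add; f_equal; lia).
    assert ((1-p)^(S k) <= 1) by (apply pow_le1; lra).
    replace (S (m + k)) with (m + S k)%nat by lia.
    specialize (Hcn k). replace (m + S k)%nat with (S (m + k)) by lia.
    assert (0 <= c (S (m+k)) * (1-p)^m * (1 - (1-p)^(S k))) by
      (apply Rmult_le_pos; [apply Rmult_le_pos|]; lra).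
    assert (E : (1-p)^m * c (S (m+k)) - c (S (m+k)) * ((1-p)^m * (1-p)^S k) =
       c (S (m+k)) * (1-p)^m * (1 - (1-p)^(S k))) by ring.
    lra. }
  split; auto. unfold Tf. fold m. split.
  - apply Rdiv_le_0_compat; [|lra].
    apply Rge_le, Rge_minus, Rle_ge. apply (Rmult_le_reg_l ((1-p)^m)); auto.
    replace ((1 - p) ^ m * (Qf c p fp i / (1 - p) ^ m)) with (Qf c p fp i) by (field; lra). lra.
  - unfold Rdiv. apply Rmult_le_compat_r. left; apply Rinv_0_lt_compat; lra.
    assert (0 <= Qf c p fp i * / (1-p)^m) by (apply Rmult_le_pos; [lra| left; apply Rinv_0_lt_compat; lra]).
    lra.
Qed.


Lemma n_pow_bound s n : 0 <= s < 1 -> INR n * s ^ n * (1 - s) <= 1 - s ^ n.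
Proof.
  intros Hs. induction n. simpl; lra.
  rewrite S_INR. simpl pow.
  assert (H0 : 0 <= s ^ n <= 1) by (apply pow_le1; lra).
  remember (s ^ n) as X. assert (0 <= INR n) by apply pos_INR.
  remember (INR n) as m.
  assert (E : (m + 1) * (s * X) * (1 - s) = s * (m * X * (1 - s)) + s * X * (1 - s)) by ring.
  rewrite E.
  assert (s * (m * X * (1 - s)) <= s * (1 - X)) by (apply Rmult_le_compat_l; lra).
  assert (0 <= (1 - s) * (1 - s * X)) by (apply Rmult_le_pos; nra).
  nra.
Qed.

Lemma n_pow_lim s : 0 <= s < 1 -> is_lim_seq (fun n => INR n * s ^ n) 0.
Proof.
  intros Hs. set (t := (1 + s) / 2).
  assert (Ht : 0 < t < 1) by (unfold t; lra).
  assert (Hst : s <= t * t) by (unfold t; nra).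
  apply (is_lim_seq_le_le (fun _ => 0) _ (fun n => / (1 - t) * t ^ n)).
  - intros n. split. apply Rmult_le_pos. apply pos_INR. apply pow_le; lra.
    assert (H1 : s ^ n <= t ^ n * t ^ n) by (rewrite <- Rpow_mult_distr; apply pow_incr; lra).
    pose proof (n_pow_bound t n ltac:(lra)).
    assert (0 <= t ^ n <= 1) by (apply pow_le1; lra).
    assert (INR n * t ^ n <= / (1 - t)).
    { apply (Rmult_le_reg_r (1 - t)); [lra|]. rewrite Rinv_l by lra. lra. }
    assert (0 <= INR n) by apply pos_INR.
    apply Rle_trans with (INR n * (t ^ n * t ^ n)). apply Rmult_le_compat_l; auto.
    rewrite <- Rmult_assoc. apply Rmult_le_compat_r; lra.
  - apply is_lim_seq_const.
  - replace (Finite 0) with (Rbar_mult (/ (1 - t)) 0) by (simpl; f_equal; ring).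
    apply is_lim_seq_scal_l. apply is_lim_seq_geom. rewrite Rabs_pos_eq; lra.
Qed.

Lemma partial_identity bits p N : 0 < p < 1 ->
  sum_f_R0 (fun n => INR n * prob_N_eq bits p n) N =
  ssum (Gs bits p (ReadX 1)) N - INR N * Gs bits p (ReadX 1) N.
Proof.
  intros Hp. induction N.
  - simpl. ring.
  - rewrite tech5, IHN.
    change (prob_N_eq bits p (S N)) with (Es bits p (ReadX 1) (S N)).
    rewrite Es_S by auto. cbn [ssum]. rewrite S_INR. ring.
Qed.

Theorem theorem5 (c : nat -> R) (p fp : R) (bits : nat -> nat -> bool) :
  (forall k : nat, (1 <= k)%nat -> 0 <= c k) ->
  infinite_sum (fun k => c (S k)) 1 ->
  0 < p < 1 ->
  (* fp = f(p) = 1 - sum_{k>=1} c_k (1-p)^k *)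
  infinite_sum (fun k => c (S k) * (1 - p) ^ (S k)) (1 - fp) ->
  (* bits k is the non-terminating binary expansion of d_k *)
  (forall k : nat, (1 <= k)%nat -> bin_expansion (dcoef c k) (bits k)) ->
  infinite_sum (fun n => INR n * prob_N_eq bits p n)
    (fp / p * (1 + 2 / (p * (1 - p)))) /\
  exists A beta : R, 0 < A /\ beta < 1 /\
    forall n : nat, prob_N_gt bits p n <= A * beta ^ n.
Proof.
  intros Hc H1 Hp H2 Hbin.
  apply is_series_Reals in H1. apply is_series_Reals in H2.
  assert (Hf : facts c p fp bits).
  { split; [auto|]. split; [|split].
    - intros i Hi. apply Dn_bounds. auto.
    - intros i Hi. apply (W_T_bounds c p fp Hc H1 Hp H2 i Hi).
    - intros i Hi. apply (W_T_bounds c p fp Hc H1 Hp H2 i Hi). }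
  destruct (G_exp_bound bits p Hp) as [Hb HG].
  set (beta := 1 - (p * (1 - p)) ^ 6 / 6) in *.
  assert (HA : 0 < / beta ^ 5) by (apply Rinv_0_lt_compat, pow_lt; lra).
  split.
  2:{ exists (/ beta ^ 5), beta. split; auto. split; [lra|]. intros n. apply HG. }
  assert (Hgood : good c (ReadX 1)).
  { simpl. split; auto. unfold Wf. simpl. lra. }
  change (Un_cv (sum_f_R0 (fun n => INR n * prob_N_eq bits p n)) (fp / p * (1 + 2 / (p * (1 - p))))).
  apply is_lim_seq_Reals.
  apply (is_lim_seq_ext (fun N => (hh c p fp bits (ReadX 1) - Hs bits p (hh c p fp bits) (ReadX 1) N)
                                  - INR N * Gs bits p (ReadX 1) N)).
  { intros N. rewrite partial_identity by auto. rewrite (mart c p fp bits N Hf _ Hgood). ring. }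
  replace (fp / p * (1 + 2 / (p * (1 - p)))) with ((hh c p fp bits (ReadX 1) - 0) - 0).
  2:{ simpl. unfold Rf, Tf, Qf, Wf, Cc. simpl. field. split; lra. }
  assert (Hgeo : is_lim_seq (fun n => / beta ^ 5 * beta ^ n) 0).
  { replace (Finite 0) with (Rbar_mult (/ beta ^ 5) 0) by (simpl; f_equal; ring).
    apply is_lim_seq_scal_l. apply is_lim_seq_geom. rewrite Rabs_pos_eq; lra. }
  apply is_lim_seq_minus'.
  - apply is_lim_seq_minus'. apply is_lim_seq_const.
    apply (is_lim_seq_le_le (fun _ => 0) _ (fun n => Hmax p * (/ beta ^ 5 * beta ^ n))).
    + intros n. destruct (Hs_bounds c p fp bits n (ReadX 1) Hf Hgood). split; auto.
      eapply Rle_trans; [eauto|]. apply Rmult_le_compat_l; auto.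
      unfold Hmax, Cc. assert (0 < 2 / (p * (1-p))) by (apply Rdiv_lt_0_compat; nra).
      assert (0 < (1 + 2 / (p * (1 - p))) / p) by (apply Rdiv_lt_0_compat; lra). lra.
    + apply is_lim_seq_const.
    + replace (Finite 0) with (Rbar_mult (Hmax p) 0) by (simpl; f_equal; ring).
      apply is_lim_seq_scal_l. auto.
  - apply (is_lim_seq_le_le (fun _ => 0) _ (fun n => / beta ^ 5 * (INR n * beta ^ n))).
    + intros n. pose proof (Gs_bounds bits p (ReadX 1) n Hp). pose proof (pos_INR n). split.
      apply Rmult_le_pos; lra.
      rewrite <- Rmult_assoc, (Rmult_comm (/ beta ^ 5)), Rmult_assoc.
      apply Rmult_le_compat_l; auto.
    + apply is_lim_seq_const.
    + replace (Finite 0) with (Rbar_mult (/ beta ^ 5) 0) by (simpl; f_equal; ring).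
      apply is_lim_seq_scal_l. apply n_pow_lim. lra.
Qed.
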